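(* Let $n\ge 3$ and $k\ge 1$ be integers, $a=nk+1$, $S=\{a\}\cup[2a-n,\,2a-2]$ and $G=\langle S\rangle$. For $i\in[0,k-1]$ let $A_{i,k}=\{(2i+1)a\}\cup[(2i+2)a-(i+1)n,\,(2i+2)a-2]$ and $B_{i,k}=\{(2i+2)a\}\cup[(2i+3)a-(i+1)n,\,(2i+3)a-2]$, and let $H=\{0\}\cup\bigcup_{i=0}^{k-1}(A_{i,k}\cup B_{i,k})\cup[2ka,\infty[$. Then: (1) $H$ is a numerical semigroup; (2) $G=H$; (3) $H$ is an $n$-permutation numerical semigroup.
   Context: $\mathbb{N}=\{0,1,2,\dots\}$. A numerical semigroup is a submonoid $G$ of $(\mathbb{N},+,0)$ with $\mathbb{N}\setminus G$ finite; $\langle S\rangle$ is the submonoid generated by $S$. Writing the elements of a numerical semigroup as $0=g_0<g_1<g_2<\cdots$, it is an $n$-permutation numerical semigroup if it is generated by $\{g_1,\dots,g_n\}$ and for every $m\in\mathbb{N}$ the tuple $(g_{mn+1}\bmod n,\dots,g_{mn+n}\bmod n)$ contains exactly one representative of each residue class of $\mathbb{Z}/n\mathbb{Z}$. Notation: $[u,v]=\{x\in\mathbb{N}:u\le x\le v\}$, $[u,\infty[=\{x\in\mathbb{N}:x\ge u\}$. *)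

(* Defs.v *)
From Stdlib Require Import Arith Lia.

Inductive gen (S : nat -> Prop) : nat -> Prop :=
| gen_zero : gen S 0
| gen_in : forall x, S x -> gen S x
| gen_add : forall x y, gen S x -> gen S y -> gen S (x + y).

Definition numerical_semigroup (G : nat -> Prop) : Prop :=
  G 0 /\ (forall x y, G x -> G y -> G (x + y)) /\
  (exists N, forall x, N <= x -> G x).

Definition enumerates (G : nat -> Prop) (g : nat -> nat) : Prop :=
  (forall i j, i < j -> g i < g j) /\ (forall x, G x <-> exists i, g i = x).

Definition n_permutation_ns (n : nat) (G : nat -> Prop) : Prop :=
  numerical_semigroup G /\
  exists g : nat -> nat, enumerates G g /\
    (forall x, G x <-> gen (fun y => exists j, 1 <= j <= n /\ y = g j) x) /\
    (forall m r, r < n ->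
       exists j, (1 <= j <= n /\ g (m * n + j) mod n = r) /\
         forall j', 1 <= j' <= n -> g (m * n + j') mod n = r -> j' = j).

Definition S_set (n k : nat) (x : nat) : Prop :=
  let a := n * k + 1 in x = a \/ (2 * a - n <= x <= 2 * a - 2).

Definition A_set (n k i : nat) (x : nat) : Prop :=
  let a := n * k + 1 in
  x = (2 * i + 1) * a \/
  ((2 * i + 2) * a - (i + 1) * n <= x <= (2 * i + 2) * a - 2).

Definition B_set (n k i : nat) (x : nat) : Prop :=
  let a := n * k + 1 in
  x = (2 * i + 2) * a \/
  ((2 * i + 3) * a - (i + 1) * n <= x <= (2 * i + 3) * a - 2).

Definition H_set (n k : nat) (x : nat) : Prop :=
  let a := n * k + 1 in
  x = 0 \/ (exists i, i <= k - 1 /\ (A_set n k i x \/ B_set n k i x)) \/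
  2 * k * a <= x.

(* Main.v *)
Require Import Defs.
From Stdlib Require Import Arith Lia Wf_nat ClassicalEpsilon Classical.

Definition cq (q : nat) := (q + 1) / 2.

Lemma cq_even m : cq (2 * m) = m.
Proof. unfold cq. symmetry. apply (Nat.div_unique _ _ _ 1); lia. Qed.
Lemma cq_odd m : cq (2 * m + 1) = m + 1.
Proof. unfold cq. symmetry. apply (Nat.div_unique _ _ _ 0); lia. Qed.

Lemma qr_unique a q1 r1 q2 r2 : q1 * a + r1 = q2 * a + r2 -> r1 < a -> r2 < a ->
  q1 = q2 /\ r1 = r2.
Proof.
  intros E H1 H2. destruct (lt_eq_lt_dec q1 q2) as [[L|L]|L].
  - assert ((q1 + 1) * a <= q2 * a) by (apply Nat.mul_le_mono_r; lia). lia.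
  - subst; lia.
  - assert ((q2 + 1) * a <= q1 * a) by (apply Nat.mul_le_mono_r; lia). lia.
Qed.

Lemma Hqr n k q r : 3 <= n -> 1 <= k -> r < n * k + 1 ->
  (H_set n k (q * (n * k + 1) + r) <->
   (2 * k <= q \/ r = 0 \/ (n * k + 1 - cq q * n <= r /\ r <= n * k + 1 - 2))).
Proof.
  intros hn hk hr. unfold H_set, A_set, B_set. cbv zeta.
  set (a := n * k + 1) in *. assert (Ha : a = n * k + 1) by reflexivity.
  clearbody a. split.
  - intros [H0 | [[i [Hi [[HA|HA]|[HB|HB]]]] | H2]].
    + lia.
    + right; left. destruct (qr_unique a q r (2*i+1) 0) as [_ ?]; lia.
    + assert ((i+1)*n <= k*n) by (apply Nat.mul_le_mono_r; lia).
      destruct (qr_unique a q r (2*i+1) (q*a + r - (2*i+1)*a)) as [Eq Er]; try lia.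
      subst q. rewrite cq_odd. right; right. lia.
    + right; left. destruct (qr_unique a q r (2*i+2) 0) as [_ ?]; lia.
    + assert ((i+1)*n <= k*n) by (apply Nat.mul_le_mono_r; lia).
      destruct (qr_unique a q r (2*i+2) (q*a + r - (2*i+2)*a)) as [Eq Er]; try lia.
      subst q. replace (2*i+2) with (2*(i+1)) by lia. rewrite cq_even. right; right. lia.
    + left. destruct (le_lt_dec (2*k) q) as [L|L]; auto.
      assert ((q+1)*a <= 2*k*a) by (apply Nat.mul_le_mono_r; lia). lia.
  - intros [L | [R0 | [R1 R2]]].
    + right; right. assert (2*k*a <= q*a) by (apply Nat.mul_le_mono_r; lia). lia.
    + subst r. destruct (le_lt_dec (2*k) q) as [L|L].
      { right; right. assert (2*k*a <= q*a) by (apply Nat.mul_le_mono_r; lia). lia. }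
      destruct (Nat.Even_or_Odd q) as [[m Hm]|[m Hm]]; subst q.
      * destruct m as [|i]; [left; lia|].
        right; left. exists i. split; [lia|]. right; left. lia.
      * right; left. exists m. split; [lia|]. left; left. lia.
    + destruct (le_lt_dec (2*k) q) as [L|L].
      { right; right. assert (2*k*a <= q*a) by (apply Nat.mul_le_mono_r; lia). lia. }
      destruct (Nat.Even_or_Odd q) as [[m Hm]|[m Hm]]; subst q.
      * rewrite cq_even in R1. destruct m as [|i]; [lia|].
        right; left. exists i. split; [lia|]. right; right. lia.
      * rewrite cq_odd in R1. right; left. exists m. split; [lia|]. left; right. lia.
Qed.

Definition T_set (n k : nat) (x : nat) : Prop :=
  exists N j d, x + d = N * (n * k + 1) /\ 2 * j <= N /\ 2 * j <= d /\ d <= j * n.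

Lemma ceil_lemma n : 3 <= n -> forall m d, 2 <= d -> d <= m * n ->
  exists j, j <= m /\ 2 * j <= d /\ d <= j * n.
Proof.
  intros hn m. induction m as [|m IH]; intros d H1 H2.
  - simpl in H2. lia.
  - destruct (le_lt_dec d (m * n)) as [L|L].
    + destruct (IH d H1 L) as [j Hj]. exists j. lia.
    + exists (S m). assert (3 * m <= m * n) by (rewrite (Nat.mul_comm 3); apply Nat.mul_le_mono_l; lia).
      lia.
Qed.

Lemma gen_mono (P Q : nat -> Prop) : (forall y, P y -> Q y) -> forall x, gen P x -> gen Q x.
Proof. intros HPQ x Hx. induction Hx; [constructor | apply gen_in; auto | apply gen_add; auto]. Qed.

Lemma gen_mul (P : nat -> Prop) a : P a -> forall m, gen P (m * a).
Proof. intros Ha m. induction m; simpl. constructor. apply gen_add; auto. now apply gen_in. Qed.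

Lemma gen_sum (P : nat -> Prop) u w : u <= w -> (forall y, u <= y <= w -> gen P y) ->
  forall q s, q * u <= s <= q * w -> gen P s.
Proof.
  intros Huw Hy q. induction q as [|q IH]; intros s Hs; simpl in Hs.
  - replace s with 0 by lia. constructor.
  - destruct (le_lt_dec (s - q * u) w) as [L|L].
    + replace s with ((s - q*u) + q*u) by lia. apply gen_add. apply Hy; lia. apply IH.
      assert (q*u <= q*w) by (apply Nat.mul_le_mono_l; lia). lia.
    + replace s with (w + (s - w)) by lia. apply gen_add. apply Hy; lia. apply IH. lia.
Qed.

Section S.
Variables n k : nat.
Hypothesis hn : 3 <= n.
Hypothesis hk : 1 <= k.

Lemma T_add x y : T_set n k x -> T_set n k y -> T_set n k (x + y).
Proof.
  intros [N1 [j1 [d1 H1]]] [N2 [j2 [d2 H2]]].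
  exists (N1+N2), (j1+j2), (d1+d2). lia.
Qed.

Lemma gen_T x : gen (S_set n k) x -> T_set n k x.
Proof.
  intro Hx. induction Hx as [|x Hx|x y _ IH1 _ IH2].
  - exists 0, 0, 0. lia.
  - unfold S_set in Hx. cbv zeta in Hx. destruct Hx as [Hx|Hx].
    + exists 1, 0, 0. lia.
    + exists 2, 1, (2 * (n*k+1) - x). lia.
  - now apply T_add.
Qed.

Lemma T_gen x : T_set n k x -> gen (S_set n k) x.
Proof.
  intros [N [j [d [E [H1 [H2 H3]]]]]].
  set (a := n*k+1) in *. assert (Ha : a = n*k+1) by reflexivity. clearbody a.
  replace N with (2*j + (N - 2*j)) in E by lia. set (e := N - 2*j) in *. clearbody e.
  assert (n*1 <= n*k) by (apply Nat.mul_le_mono_l; lia).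
  assert (j*n <= j*a) by (apply Nat.mul_le_mono_l; lia).
  replace x with (e * a + (x - e*a)) by lia. apply gen_add.
  - apply gen_mul. unfold S_set. cbv zeta. left; lia.
  - apply (gen_sum _ (2*a - n) (2*a - 2)) with (q := j); try lia.
    + intros y Hy. apply gen_in. unfold S_set. cbv zeta. right; lia.
Qed.

Lemma T_H x : T_set n k x -> H_set n k x.
Proof.
  intros [N [j [d [E [H1 [H2 H3]]]]]].
  destruct (le_lt_dec N (2*k)) as [L|L].
  - destruct (Nat.eq_dec d 0) as [D|D].
    + subst d. rewrite Nat.add_0_r in E. subst x.
      replace (N * (n*k+1)) with (N * (n*k+1) + 0) by lia. apply Hqr; lia.
    + assert (j*n <= k*n) by (apply Nat.mul_le_mono_r; lia).
      assert (1 <= j) by (destruct j; simpl in H3; lia).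
      destruct N as [|N']; [lia|].
      replace x with (N' * (n*k+1) + (n*k+1 - d)) by lia.
      apply Hqr; try lia. right; right.
      destruct (Nat.Even_or_Odd N') as [[m Hm]|[m Hm]]; subst N'.
      * rewrite cq_even. assert (j*n <= m*n) by (apply Nat.mul_le_mono_r; lia). lia.
      * rewrite cq_odd. assert (j*n <= (m+1)*n) by (apply Nat.mul_le_mono_r; lia). lia.
  - unfold H_set. cbv zeta. right; right.
    destruct (le_lt_dec j k) as [J|J].
    + assert (j*n <= k*n) by (apply Nat.mul_le_mono_r; lia).
      assert ((2*k+1)*(n*k+1) <= N*(n*k+1)) by (apply Nat.mul_le_mono_r; lia). lia.
    + replace N with (2*k+1+(N-2*k-1)) in E by lia.
      assert (HN : N = 2*k+1+(N-2*k-1)) by lia.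
      set (e := N-2*k-1) in *. clearbody e.
      replace j with (k + (j - k)) in H3 by lia.
      assert (n*1 <= n*k) by (apply Nat.mul_le_mono_l; lia).
      assert ((j-k)*n <= e*(n*k+1)) by (apply Nat.mul_le_mono; [lia|]; lia).
      lia.
Qed.

Lemma H_T x : H_set n k x -> T_set n k x.
Proof.
  intro Hx.
  set (a := n*k+1).
  assert (Ha : 0 < a) by lia.
  pose proof (Nat.div_mod x a ltac:(lia)) as Ex.
  pose proof (Nat.mod_upper_bound x a ltac:(lia)) as Er.
  set (q := x / a) in *. set (r := x mod a) in *. clearbody q r.
  rewrite Ex, Nat.mul_comm in Hx. apply Hqr in Hx; try lia.
  rewrite Ex, Nat.mul_comm.
  destruct (Nat.eq_dec r 0) as [R|R].
  { exists q, 0, 0. unfold a. lia. }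
  destruct Hx as [L | [R0 | [R1 R2]]]; [|lia|].
  - destruct (Nat.eq_dec r (a-1)) as [R'|R'].
    + destruct (ceil_lemma n hn (k+1) (a+1)) as [j Hj]; try (unfold a; lia).
      exists (q+2), j, (a+1). unfold a in *. lia.
    + destruct (ceil_lemma n hn k (a-r)) as [j Hj]; try (unfold a in *; lia).
      exists (q+1), j, (a-r). unfold a in *. lia.
  - destruct (ceil_lemma n hn (cq q) (a-r)) as [j Hj]; try (unfold a in *; lia).
    assert (2 * cq q <= q + 1).
    { destruct (Nat.Even_or_Odd q) as [[m Hm]|[m Hm]]; subst q.
      rewrite cq_even; lia. rewrite cq_odd; lia. }
    exists (q+1), j, (a-r). unfold a in *. lia.
Qed.

End S.

Lemma least_gt (P : nat -> Prop) x : (exists y, P y /\ x < y) ->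
  exists y, (P y /\ x < y) /\ forall z, P z /\ x < z -> y <= z.
Proof.
  intro Hex.
  destruct (dec_inh_nat_subset_has_unique_least_element (fun y => P y /\ x < y)
    (fun y => classic _) Hex) as [y [[Hy Hmin] _]].
  exists y. split; auto.
Qed.

Lemma ex_H n k x : exists y, H_set n k y /\ x < y.
Proof.
  exists (x + 2 * k * (n*k+1) + 1). split; [|lia].
  unfold H_set. cbv zeta. right; right. lia.
Qed.

Definition nxt n k x : nat :=
  proj1_sig (constructive_indefinite_description _ (least_gt (H_set n k) x (ex_H n k x))).

Lemma nxt_spec n k x : (H_set n k (nxt n k x) /\ x < nxt n k x) /\
  forall z, H_set n k z /\ x < z -> nxt n k x <= z.
Proof. unfold nxt. destruct (constructive_indefinite_description _ _) as [y Hy]. exact Hy. Qed.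

Lemma nxt_char n k x y : H_set n k y -> x < y -> (forall z, x < z < y -> ~ H_set n k z) ->
  nxt n k x = y.
Proof.
  intros Hy Lxy Hz. destruct (nxt_spec n k x) as [[H1 H2] H3].
  specialize (H3 y (conj Hy Lxy)).
  destruct (Nat.eq_dec (nxt n k x) y) as [E|E]; auto.
  exfalso. apply (Hz (nxt n k x)); auto. lia.
Qed.

Definition gs n k t := Nat.iter t (nxt n k) 0.

Lemma gs_S n k t : gs n k (S t) = nxt n k (gs n k t).
Proof. reflexivity. Qed.

Lemma gs_H n k t : H_set n k (gs n k t).
Proof.
  induction t. unfold gs; simpl. unfold H_set; cbv zeta; left; reflexivity.
  rewrite gs_S. apply nxt_spec.
Qed.

Lemma gs_lt n k t : gs n k t < gs n k (S t).
Proof. rewrite gs_S. apply nxt_spec. Qed.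

Lemma gs_mono n k i j : i < j -> gs n k i < gs n k j.
Proof.
  intro L. induction L. apply gs_lt. pose proof (gs_lt n k m). lia.
Qed.

Lemma gs_ge n k t : t <= gs n k t.
Proof. induction t. lia. pose proof (gs_lt n k t). lia. Qed.

Lemma gs_surj n k t : forall x, H_set n k x -> x <= gs n k t -> exists s, gs n k s = x.
Proof.
  induction t; intros x Hx Lx.
  - exists 0. unfold gs in *; simpl in *. lia.
  - destruct (le_lt_dec x (gs n k t)) as [L|L]. now apply IHt.
    exists (S t). rewrite gs_S in *. destruct (nxt_spec n k (gs n k t)) as [_ H3].
    specialize (H3 x (conj Hx L)). lia.
Qed.

Lemma gs_enum n k : enumerates (H_set n k) (gs n k).
Proof.
  split. apply gs_mono. intro x; split.
  - intro Hx. apply (gs_surj n k x); auto. apply gs_ge.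
  - intros [i <-]. apply gs_H.
Qed.

Section S.
Variables n k : nat.
Hypothesis hn : 3 <= n.
Hypothesis hk : 1 <= k.

Lemma cq_bounds q : 1 <= q -> q < 2 * k -> 1 <= cq q /\ cq q <= k.
Proof.
  intros. destruct (Nat.Even_or_Odd q) as [[m Hm]|[m Hm]]; subst q.
  rewrite cq_even; lia. rewrite cq_odd; lia.
Qed.

Lemma kn_lt : forall c, c <= k -> c * n <= n * k.
Proof. intros. rewrite (Nat.mul_comm n). apply Nat.mul_le_mono_r. lia. Qed.

Lemma nxt_a q r : r < n*k+1 -> 2 * k <= q -> nxt n k (q*(n*k+1) + r) = q*(n*k+1) + r + 1.
Proof.
  intros Hr Hq. apply nxt_char; [|lia|intros; lia].
  unfold H_set; cbv zeta. right; right.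
  assert (2*k*(n*k+1) <= q*(n*k+1)) by (apply Nat.mul_le_mono_r; lia). lia.
Qed.

Lemma nxt_b q : 1 <= q -> q < 2 * k ->
  nxt n k (q*(n*k+1)) = q*(n*k+1) + (n*k+1 - cq q * n).
Proof.
  intros H1 H2. destruct (cq_bounds q H1 H2) as [C1 C2]. pose proof (kn_lt _ C2).
  assert (1 * n <= cq q * n) by (apply Nat.mul_le_mono_r; lia).
  apply nxt_char; [| lia |].
  - apply Hqr; lia.
  - intros z Hz Hz'. replace z with (q*(n*k+1) + (z - q*(n*k+1))) in Hz' by lia.
    apply Hqr in Hz'; lia.
Qed.

Lemma nxt_c q r : q < 2 * k -> n*k+1 - cq q * n <= r -> r + 3 <= n*k+1 ->
  nxt n k (q*(n*k+1) + r) = q*(n*k+1) + r + 1.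
Proof.
  intros H1 H2 H3. apply nxt_char; [| lia | intros; lia].
  replace (q * (n * k + 1) + r + 1) with (q * (n * k + 1) + (r + 1)) by lia.
  apply Hqr; lia.
Qed.

Lemma nxt_d q : q < 2 * k ->
  nxt n k (q*(n*k+1) + (n*k+1-2)) = (q+1)*(n*k+1).
Proof.
  intros H1. apply nxt_char; [| lia |].
  - replace ((q+1)*(n*k+1)) with ((q+1)*(n*k+1) + 0) by lia. apply Hqr; lia.
  - intros z Hz Hz'. replace z with (q*(n*k+1) + (n*k+1-1)) in Hz' by lia.
    apply Hqr in Hz'; lia.
Qed.

Lemma cong_add (x y w : nat) : x mod n = y mod n -> (x + w) mod n = (y + w) mod n.
Proof.
  intro E. rewrite (Nat.Div0.add_mod x), (Nat.Div0.add_mod y), E. reflexivity.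
Qed.

Lemma cong_mul (x p : nat) : (x + p * n) mod n = x mod n.
Proof. apply Nat.Div0.mod_add. Qed.

Definition Inv t := exists q r, r < n*k+1 /\ gs n k t = q*(n*k+1) + r /\
  (t + Nat.min q (2*k)) mod n = (gs n k t + 1) mod n.

Lemma gs_1 : gs n k 1 = n*k+1.
Proof.
  unfold gs; simpl. apply nxt_char; [| lia |].
  - replace (n*k+1) with (1*(n*k+1) + 0) by lia. apply Hqr; lia.
  - intros z Hz Hz'. replace z with (0*(n*k+1) + z) in Hz' by lia.
    apply Hqr in Hz'; try lia. unfold cq in Hz'; simpl in Hz'. lia.
Qed.

Lemma inv_all t : 1 <= t -> Inv t.
Proof.
  induction t as [|t IH]; intro Ht; [lia|].
  destruct (Nat.eq_dec t 0) as [T0|T0].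
  { subst t. exists 1, 0. rewrite gs_1. split; [lia|]. split; [lia|].
    replace (Nat.min 1 (2*k)) with 1 by lia.
    replace (n*k+1+1) with (2 + k*n) by lia. rewrite cong_mul. reflexivity. }
  destruct (IH ltac:(lia)) as [q [r [Hr [Eg Hm]]]].
  pose proof (gs_H n k t) as HH. rewrite Eg in HH. apply Hqr in HH; try lia.
  unfold Inv. rewrite gs_S, Eg.
  destruct (le_lt_dec (2*k) q) as [Q|Q].
  - rewrite nxt_a by lia.
    replace (Nat.min q (2*k)) with (2*k) in Hm by lia.
    destruct (Nat.eq_dec (r+1) (n*k+1)) as [R|R].
    + exists (q+1), 0. split; [lia|]. split; [lia|].
      replace (Nat.min (q+1) (2*k)) with (2*k) by lia.
      replace (S t + 2*k) with (t + 2*k + 1) by lia.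
      apply cong_add with (w := 1) in Hm. rewrite Hm, Eg; f_equal; lia.
    + exists q, (r+1). split; [lia|]. split; [lia|].
      replace (Nat.min q (2*k)) with (2*k) by lia.
      replace (S t + 2*k) with (t + 2*k + 1) by lia.
      apply cong_add with (w := 1) in Hm. rewrite Hm, Eg; f_equal; lia.
  - assert (Q1 : 1 <= q).
    { destruct q; [|lia]. destruct HH as [HH|[HH|HH]]; [lia| |].
      - subst r. pose proof (gs_ge n k t). lia.
      - unfold cq in HH; simpl in HH. lia. }
    destruct (cq_bounds q Q1 Q) as [C1 C2]. pose proof (kn_lt _ C2).
    replace (Nat.min q (2*k)) with q in Hm by lia.
    destruct HH as [HH|[HH|[HH1 HH2]]]; [lia| |].
    + subst r. rewrite Nat.add_0_r. rewrite nxt_b by lia.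
      exists q, (n*k+1 - cq q * n). split; [lia|]. split; [lia|].
      replace (Nat.min q (2*k)) with q by lia.
      replace (q * (n * k + 1) + (n * k + 1 - cq q * n) + 1) with
        ((q*(n*k+1) + 0 + 1) + 1 + (k - cq q) * n).
      2:{ assert (cq q * n <= k * n) by (apply Nat.mul_le_mono_r; lia).
          rewrite Nat.mul_sub_distr_r. lia. }
      rewrite cong_mul. rewrite <- Eg. replace (S t + q) with (t + q + 1) by lia.
      apply cong_add. exact Hm.
    + destruct (Nat.eq_dec r (n*k+1-2)) as [R|R].
      * subst r. rewrite nxt_d by lia. exists (q+1), 0. split; [lia|]. split; [lia|].
        replace (Nat.min (q+1) (2*k)) with (q+1) by lia.
        replace (S t + (q+1)) with (t + q + 2) by lia.
        apply cong_add with (w := 2) in Hm. rewrite Hm, Eg; f_equal; lia.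
      * rewrite nxt_c by lia. exists q, (r+1). split; [lia|]. split; [lia|].
        replace (Nat.min q (2*k)) with q by lia.
        replace (S t + q) with (t + q + 1) by lia.
        apply cong_add with (w := 1) in Hm. rewrite Hm, Eg; f_equal; lia.
Qed.

Lemma cong_cancel x y w : (x + w) mod n = (y + w) mod n -> x mod n = y mod n.
Proof.
  intro E.
  assert (Hw : w = n * (w / n) + w mod n) by (apply Nat.div_mod; lia).
  pose proof (Nat.mod_upper_bound w n ltac:(lia)).
  assert (Ex : x + w + (n - w mod n) = x + (w / n + 1) * n) by lia.
  assert (Ey : y + w + (n - w mod n) = y + (w / n + 1) * n) by lia.
  rewrite <- (cong_mul x (w/n+1)), <- (cong_mul y (w/n+1)), <- Ex, <- Ey.
  now apply cong_add.
Qed.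

Lemma step_mod t : 1 <= t -> t mod n <> 0 -> gs n k (S t) mod n = (gs n k t + 1) mod n.
Proof.
  intros Ht Tn. destruct (inv_all t Ht) as [q [r [Hr [Eg Hm]]]].
  pose proof (gs_H n k t) as HH. rewrite Eg in HH. apply Hqr in HH; try lia.
  rewrite gs_S, Eg. rewrite Eg in Hm.
  destruct (le_lt_dec (2*k) q) as [Q|Q].
  - rewrite nxt_a by lia. reflexivity.
  - assert (Q1 : 1 <= q).
    { destruct q; [|lia]. destruct HH as [HH|[HH|HH]]; [lia| |].
      - subst r. pose proof (gs_ge n k t). lia.
      - unfold cq in HH; simpl in HH. lia. }
    destruct (cq_bounds q Q1 Q) as [C1 C2]. pose proof (kn_lt _ C2).
    replace (Nat.min q (2*k)) with q in Hm by lia.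
    destruct HH as [HH|[HH|[HH1 HH2]]]; [lia| |].
    + subst r. rewrite Nat.add_0_r. rewrite nxt_b by lia.
      replace (q * (n * k + 1) + (n * k + 1 - cq q * n)) with
        ((q*(n*k+1) + 0 + 1) + (k - cq q) * n).
      2:{ assert (cq q * n <= k * n) by (apply Nat.mul_le_mono_r; lia).
          rewrite Nat.mul_sub_distr_r. lia. }
      rewrite cong_mul. f_equal. lia.
    + destruct (Nat.eq_dec r (n*k+1-2)) as [R|R].
      * exfalso. subst r. apply Tn.
        replace (q * (n * k + 1) + (n * k + 1 - 2) + 1) with (0 + q + (q*k+k)*n) in Hm by lia.
        rewrite cong_mul in Hm. apply cong_cancel in Hm. rewrite Hm. apply Nat.Div0.mod_0_l.
      * rewrite nxt_c by lia. reflexivity.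
Qed.

Lemma chunk m j : 1 <= j <= n -> gs n k (m*n + j) mod n = (gs n k (m*n+1) + (j-1)) mod n.
Proof.
  induction j as [|j IH]; intro Hj; [lia|].
  destruct (Nat.eq_dec j 0) as [J|J]. { subst. f_equal. lia. }
  replace (m*n + S j) with (S (m*n+j)) by lia.
  rewrite step_mod; try lia.
  - replace (gs n k (m*n+1) + (S j - 1)) with (gs n k (m*n+1) + (j-1) + 1) by lia.
    apply cong_add. apply IH. lia.
  - replace (m*n+j) with (j + m*n) by lia. rewrite cong_mul. rewrite Nat.mod_small; lia.
Qed.

Lemma mod_2n x : x < 2 * n -> (x < n /\ x mod n = x) \/ (n <= x /\ x mod n = x - n).
Proof.
  intro. destruct (le_lt_dec n x).
  - right. split; auto. replace x with ((x - n) + 1 * n) at 1 by lia.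
    rewrite cong_mul. apply Nat.mod_small. lia.
  - left. split; auto. apply Nat.mod_small; auto.
Qed.

Lemma perm_chunk m r : r < n ->
  exists j, (1 <= j <= n /\ gs n k (m * n + j) mod n = r) /\
    forall j', 1 <= j' <= n -> gs n k (m * n + j') mod n = r -> j' = j.
Proof.
  intro Hr. set (v := gs n k (m*n+1)).
  assert (Hv : v mod n < n) by (apply Nat.mod_upper_bound; lia).
  set (w := (r + n - v mod n) mod n).
  assert (Hw : w < n) by (apply Nat.mod_upper_bound; lia).
  assert (Hs : forall u, u < n -> (v + u) mod n = (v mod n + u) mod n).
  { intros. now rewrite Nat.Div0.add_mod_idemp_l. }
  exists (w + 1). split.
  - split; [lia|]. rewrite chunk by lia. fold v. replace (w + 1 - 1) with w by lia.
    unfold w. rewrite Nat.Div0.add_mod_idemp_r, <- Nat.Div0.add_mod_idemp_l.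
    replace (v mod n + (r + n - v mod n)) with (r + 1 * n) by lia.
    rewrite cong_mul. apply Nat.mod_small; auto.
  - intros j' Hj' E. rewrite chunk in E by lia. fold v in E.
    assert (E2 : (v + (j'-1)) mod n = (v + w) mod n).
    { rewrite E. unfold w. rewrite Nat.Div0.add_mod_idemp_r, <- Nat.Div0.add_mod_idemp_l.
      replace (v mod n + (r + n - v mod n)) with (r + 1 * n) by lia.
      rewrite cong_mul. symmetry. apply Nat.mod_small; auto. }
    rewrite (Hs (j'-1)), (Hs w) in E2 by lia.
    destruct (mod_2n (v mod n + (j'-1))) as [[? ?]|[? ?]]; try lia;
    destruct (mod_2n (v mod n + w)) as [[? ?]|[? ?]]; lia.
Qed.

Lemma gs_small j : 2 <= j <= n -> gs n k j = 1*(n*k+1) + (n*k+1 - n + (j - 2)).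
Proof.
  assert (n*1 <= n*k) by (apply Nat.mul_le_mono_l; lia).
  induction j as [|j IH]; intro Hj; [lia|].
  rewrite gs_S. destruct (Nat.eq_dec j 1) as [J|J].
  - subst j. rewrite gs_1. replace (n*k+1) with (1*(n*k+1)) at 1 by lia.
    rewrite nxt_b by lia. replace (cq 1) with 1 by (symmetry; apply (cq_odd 0)). f_equal. lia.
  - rewrite IH by lia. rewrite nxt_c; try lia.
    replace (cq 1) with 1 by (symmetry; apply (cq_odd 0)). lia.
Qed.

Lemma S_gs y : S_set n k y <-> exists j, 1 <= j <= n /\ y = gs n k j.
Proof.
  assert (n*1 <= n*k) by (apply Nat.mul_le_mono_l; lia).
  unfold S_set; cbv zeta. split.
  - intros [Hy|Hy].
    + exists 1. split; [lia|]. rewrite gs_1. auto.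
    + exists (y - (2*(n*k+1) - n) + 2). split; [lia|]. rewrite gs_small by lia. lia.
  - intros [j [Hj ->]]. destruct (Nat.eq_dec j 1) as [J|J].
    + subst. rewrite gs_1. auto.
    + right. rewrite gs_small by lia. lia.
Qed.

End S.

Theorem lemma5p2 (n k : nat) (hn : 3 <= n) (hk : 1 <= k) :
  numerical_semigroup (H_set n k) /\
  (forall x, gen (S_set n k) x <-> H_set n k x) /\
  n_permutation_ns n (H_set n k).
Proof.
  assert (NS : numerical_semigroup (H_set n k)).
  { split; [unfold H_set; cbv zeta; now left|]. split.
    - intros x y Hx Hy. apply (T_H n k hn hk); auto. apply (T_add n k hn hk); apply (H_T n k hn hk); auto.
    - exists (2*k*(n*k+1)). intros x Hx. unfold H_set; cbv zeta. right; right. exact Hx. }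
  assert (GH : forall x, gen (S_set n k) x <-> H_set n k x).
  { intro x; split; intro Hx. apply (T_H n k hn hk); auto. apply (gen_T n k hn hk); auto.
    apply (T_gen n k hn hk); auto. apply (H_T n k hn hk); auto. }
  split; [exact NS|]. split; [exact GH|].
  split; [exact NS|]. exists (gs n k). split; [apply gs_enum|]. split.
  - intro x. rewrite <- GH. split; apply gen_mono; intro y; apply (S_gs n k hn hk).
  - intros m r Hr. apply (perm_chunk n k hn hk); auto.
Qed.
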